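(* Let $\Gamma$ be a finite connected graph with vertex set $V$, and let $Y\subset Z\subset V$ with $Z\neq\emptyset$. Let $s:V\to\mathbb{Z}_{\ge0}$. Let $H_w(s,Y)$ be the expected number of particles stopping in $Y$ when $s(x)$ particles start at each vertex $x$ and perform independent simple random walks on $\Gamma$, each stopped on first hitting $Z$. Let $H_r(s,Y)$ be the number of particles stopping in $Y$ when $s(x)$ particles start at each vertex $x$ and perform rotor-router walks on $\Gamma$, each stopped on first hitting $Z$ (particles moved one step at a time in any order until all lie in $Z$). Let $H(x)=H_w(\mathbf{1}_{x},Y)$ be the probability that simple random walk from $x$ stopped on hitting $Z$ stops in $Y$. Then \[ |H_r(s,Y)-H_w(s,Y)|\le\sum_{u\in V\setminus Z}\ \sum_{v\sim u}|H(u)-H(v)|, \] regardless of $s$, of the initial rotor configuration, and of the order of moves.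
   Context: Rotor-router walk on a graph: each vertex $u$ has a fixed cyclic ordering of its neighbors and a rotor pointing to one of them (initial positions arbitrary). A particle at $u$ (with $u\notin Z$) advances the rotor at $u$ to the next neighbor in the cyclic order and moves to that neighbor. Particles at vertices of $Z$ do not move. Simple random walk moves from $u$ to a uniformly random neighbor. $\mathbf{1}_x$ is the indicator function of $\{x\}$. *)

(* Defs.v *)
From mathcomp Require Import all_boot.
From Stdlib Require Import Reals.
Set Implicit Arguments. Unset Strict Implicit. Unset Printing Implicit Defensive.

Section Walks.
Variables (T : finType) (e : rel T) (Z : {set T}).

Definition deg (u : T) : nat := #|[pred v | e u v]|.

Definition srw_step (u v : T) : R :=
  if u \in Z then (if u == v then 1%R else 0%R)
  else (if e u v then (/ INR (deg u))%R else 0%R).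

Fixpoint srw_pn (n : nat) (x y : T) : R :=
  match n with
  | 0 => if x == y then 1%R else 0%R
  | n'.+1 => \big[Rplus/0%R]_(v : T) (srw_step x v * srw_pn n' v y)%R
  end.

Definition srw_in (Y : {set T}) (n : nat) (x : T) : R :=
  \big[Rplus/0%R]_(y in Y) srw_pn n x y.

(* hitting probability: H x is the probability that SRW from x, stopped on
   first hitting Z, stops in Y  (limit of srw_in Y n x as n -> oo) *)
Definition is_hit_prob (Y : {set T}) (H : T -> R) : Prop :=
  forall x, Un_cv (fun n => srw_in Y n x) (H x).

(* expected number of particles stopping in Y, s x particles started at x
   (independent walks; linearity of expectation) *)
Definition Hw (s : T -> nat) (H : T -> R) : R :=
  \big[Rplus/0%R]_(x : T) (INR (s x) * H x)%R.

(* rotor-router: nbrs u is the cyclic ordering of the neighbours of u *)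
Definition rotor_state := ((T -> nat) * (T -> T))%type.

Definition rotor_move (nbrs : T -> seq T) (st : rotor_state) (u : T)
  : option rotor_state :=
  let: (cnt, rot) := st in
  if (u \notin Z) && (0 < cnt u) then
    let r := next (nbrs u) (rot u) in
    Some ((fun w => if w == r then (if w == u then cnt w else (cnt w).+1)
                    else if w == u then (cnt w).-1 else cnt w),
          (fun w => if w == u then r else rot w))
  else None.

Fixpoint rotor_run (nbrs : T -> seq T) (st : rotor_state) (ms : seq T)
  : option rotor_state :=
  match ms with
  | [::] => Some st
  | u :: ms' =>
      match rotor_move nbrs st u with
      | Some st' => rotor_run nbrs st' ms'
      | None => None
      end
  end.

End Walks.

(* Main.v *)
From HB Require Import structures.
Require Import Defs.
From mathcomp Require Import all_boot.
From Stdlib Require Import Reals Lra Lia FunctionalExtensionality.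

Lemma Rplus_assoc' : associative Rplus. Proof. by move=> *; rewrite Rplus_assoc. Qed.
HB.instance Definition _ := Monoid.isComLaw.Build R 0%R Rplus Rplus_assoc' Rplus_comm Rplus_0_l.

Open Scope R_scope.

Lemma sumR_mull (I : Type) (r : seq I) (P : pred I) (c : R) (F : I -> R) :
  c * \big[Rplus/0]_(i <- r | P i) F i = \big[Rplus/0]_(i <- r | P i) (c * F i).
Proof.
apply: (big_rec2 (fun a b => c * a = b)); first by rewrite Rmult_0_r.
by move=> i a b _ <-; rewrite Rmult_plus_distr_l.
Qed.

Lemma sumR_pred1 (T : finType) (a : T) (c : R) :
  \big[Rplus/0]_(x : T) (if x == a then c else 0) = c.
Proof.
rewrite (bigD1 a) //= eqxx big1 ?Rplus_0_r // => x /negbTE ->; done.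
Qed.

Lemma sumR_Rabs (I : Type) (r : seq I) (P : pred I) (F : I -> R) :
  Rabs (\big[Rplus/0]_(i <- r | P i) F i) <= \big[Rplus/0]_(i <- r | P i) Rabs (F i).
Proof.
apply: (big_rec2 (fun a b => Rabs a <= b)); first by rewrite Rabs_R0; lra.
move=> i a b _ Hab; apply: Rle_trans (Rabs_triang _ _) _; lra.
Qed.

Lemma sumR_le (I : Type) (r : seq I) (P : pred I) (F G : I -> R) :
  (forall i, P i -> F i <= G i) ->
  \big[Rplus/0]_(i <- r | P i) F i <= \big[Rplus/0]_(i <- r | P i) G i.
Proof.
move=> HFG; apply: (big_rec2 (fun a b => a <= b)); first lra.
move=> i a b Pi Hab; have := HFG i Pi; lra.
Qed.

Lemma sumR_opp (I : Type) (r : seq I) (P : pred I) (F : I -> R) :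
  \big[Rplus/0]_(i <- r | P i) (- F i) = - \big[Rplus/0]_(i <- r | P i) F i.
Proof.
apply: (big_rec2 (fun a b => a = - b)); first lra.
move=> i a b _ ->; lra.
Qed.

Lemma sumR_const (T : finType) (P : pred T) (c : R) :
  \big[Rplus/0]_(i | P i) c = INR #|P| * c.
Proof.
rewrite big_const; elim: #|P| => [|n IH]; first by rewrite /= Rmult_0_l.
rewrite iterS IH S_INR; lra.
Qed.

Lemma INR_sum (I : Type) (r : seq I) (P : pred I) (F : I -> nat) :
  INR (\sum_(i <- r | P i) F i) = \big[Rplus/0]_(i <- r | P i) INR (F i).
Proof.
apply: (big_morph INR) => //. move=> x y; exact: plus_INR.
Qed.

Lemma Un_cv_shift (u : nat -> R) l : Un_cv u l -> Un_cv (fun n => u n.+1) l.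
Proof.
move=> Hu eps Heps; have [N HN] := Hu eps Heps; exists N => n Hn; apply: HN.
lia.
Qed.

Lemma Un_cv_const_eq (c l : R) : Un_cv (fun _ => c) l -> l = c.
Proof.
move=> H; apply: (UL_sequence (fun _ => c)) => // eps Heps; exists O => n _.
rewrite /R_dist Rminus_diag Rabs_R0; lra.
Qed.

Lemma Un_cv_sum (I : Type) (r : seq I) (a : I -> R) (f : nat -> I -> R) (L : I -> R) :
  (forall i, Un_cv (fun n => f n i) (L i)) ->
  Un_cv (fun n => \big[Rplus/0]_(i <- r) (a i * f n i)) (\big[Rplus/0]_(i <- r) (a i * L i)).
Proof.
move=> Hf; elim: r => [|i r IH].
  rewrite big_nil; move=> eps Heps; exists O => n _; rewrite big_nil /R_dist Rminus_diag Rabs_R0; lra.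
rewrite big_cons.
have -> : (fun n => \big[Rplus/0]_(j <- i :: r) (a j * f n j)) =
          (fun n => a i * f n i + \big[Rplus/0]_(j <- r) (a j * f n j)).
  by apply: functional_extensionality => n; rewrite big_cons.
apply: CV_plus => //.
apply: (CV_mult (fun _ => a i) (fun n => f n i)) => //.

move=> eps Heps; exists O => n _; rewrite /R_dist Rminus_diag Rabs_R0; lra.
Qed.
Lemma pn_Z (T : finType) (e : rel T) (Z : {set T}) n x y :
  x \in Z -> srw_pn e Z n x y = if x == y then 1 else 0.
Proof.
move=> xZ; elim: n => [|n IH] //=.
rewrite (eq_bigr (fun v => if v == x then srw_pn e Z n x y else 0)).
  by rewrite sumR_pred1.
move=> v _; rewrite /srw_step xZ eq_sym; case: eqP => [->|_]; lra.
Qed.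

Lemma srw_in_S (T : finType) (e : rel T) (Z Y : {set T}) n x :
  srw_in e Z Y n.+1 x = \big[Rplus/0]_(v : T) (srw_step e Z x v * srw_in e Z Y n v).
Proof.
rewrite /srw_in /= exchange_big /=; apply: eq_bigr => v _.
by rewrite sumR_mull.
Qed.

Lemma H_Z (T : finType) (e : rel T) (Z Y : {set T}) (H : T -> R) :
  is_hit_prob e Z Y H -> forall x, x \in Z -> H x = if x \in Y then 1 else 0.
Proof.
move=> Hd x xZ.
set c := (if x \in Y then 1 else 0).
apply: (@Un_cv_const_eq c).
have := Hd x; rewrite /srw_in.
have -> : (fun n => \big[Rplus/0]_(y in Y) srw_pn e Z n x y) = (fun _ => c) => //.
apply: functional_extensionality => n.
rewrite big_mkcond (eq_bigr (fun y => if y == x then c else 0)) ?sumR_pred1 //.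
move=> y _; rewrite pn_Z // eq_sym /c; case: eqP => [->|] //; by case: ifP.
Qed.

Lemma H_harm (T : finType) (e : rel T) (Z Y : {set T}) (H : T -> R) :
  is_hit_prob e Z Y H -> forall x, 
  H x = \big[Rplus/0]_(v : T) (srw_step e Z x v * H v).
Proof.
move=> Hd x; have Hs := Un_cv_shift _ _ (Hd x); simpl in Hs.
apply: (UL_sequence _ _ _ Hs).
have -> : (fun n => srw_in e Z Y n.+1 x) =
   (fun n => \big[Rplus/0]_(v : T) (srw_step e Z x v * srw_in e Z Y n v)).
  by apply: functional_extensionality => n; rewrite srw_in_S.
exact: Un_cv_sum.
Qed.

Lemma harm_sum (T : finType) (e : rel T) (Z Y : {set T}) (H : T -> R) :
  is_hit_prob e Z Y H -> forall x, x \notin Z ->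
  \big[Rplus/0]_(v | e x v) (H v - H x) = 0.
Proof.
move=> Hd x xZ.
have Hx := H_harm _ _ _ _ _ Hd x.
rewrite /srw_step (negbTE xZ) in Hx.
have : H x = / INR (deg e x) * \big[Rplus/0]_(v | e x v) H v.
  rewrite Hx sumR_mull [X in _ = X]big_mkcond; apply: eq_bigr => v _; case: ifP => _; lra.
move=> {}Hx.
have -> : \big[Rplus/0]_(v | e x v) (H v - H x) =
   \big[Rplus/0]_(v | e x v) H v + \big[Rplus/0]_(v | e x v) (- H x).
  by rewrite -big_split.
rewrite sumR_opp sumR_const -/(deg e x).
case: (posnP (deg e x)) => d0.
  rewrite big_pred0; last by move=> v; apply: (card0_eq d0).
  rewrite d0 /=; lra.
rewrite Hx -Rmult_assoc Rinv_r; first lra.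
apply: not_0_INR => h; by rewrite h in d0.
Qed.
Lemma nbrs_sum (T : finType) (e : rel T) (c : seq T) (u : T) (F : T -> R) :
  uniq c -> (forall v, (v \in c) = e u v) ->
  \big[Rplus/0]_(v <- c) F v = \big[Rplus/0]_(v | e u v) F v.
Proof.
move=> cu cs.
rewrite (perm_big (enum [pred v | e u v])); last first.
  apply: uniq_perm => //; first exact: enum_uniq.
  by move=> v; rewrite mem_enum cs.
by rewrite big_enum.
Qed.

Definition psi (T : eqType) (H : T -> R) (c : seq T) (u x : T) : R :=
  \big[Rplus/0]_(v <- take (index x c).+1 c) (H v - H u).
Arguments psi {T}.

Lemma psi_next (T : eqType) (H : T -> R) (c : seq T) (u x : T) :
  uniq c -> x \in c -> \big[Rplus/0]_(v <- c) (H v - H u) = 0 ->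
  psi H c u (next c x) = psi H c u x + (H (next c x) - H u).
Proof.
case: c => [|y c'] // cu xc hsum.
rewrite next_nth xc /psi.
have ilt : (index x (y :: c') < size (y :: c'))%nat by rewrite index_mem.
case: (ltnP (index x (y :: c')) (size c')) => hi.
  have -> : nth y c' (index x (y :: c')) = nth y (y :: c') (index x (y :: c')).+1 by [].
  rewrite index_uniq //.
  rewrite (take_nth y) // -cats1 big_cat big_seq1 //.
have hi' : index x (y :: c') = size c'.
  by apply/eqP; rewrite eqn_leq hi andbT -ltnS.
rewrite hi' nth_default // /= eqxx take0 big_seq1.
rewrite take_size hsum; lra.
Qed.

Lemma prefix_bound (T : Type) (c : seq T) (f : T -> R) (a b : nat) :
  Rabs (\big[Rplus/0]_(v <- take a c) f v - \big[Rplus/0]_(v <- take b c) f v)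
  <= \big[Rplus/0]_(v <- c) Rabs (f v).
Proof.
elim: c a b => [|x c IH] a b.
  rewrite /= !big_nil Rminus_diag Rabs_R0; lra.
have IH0 := IH 0%nat.
rewrite take0 big_nil in IH0.
rewrite big_cons.
have Hx := Rabs_pos (f x).
case: a => [|a]; case: b => [|b]; rewrite ?take0 /= ?big_nil ?big_cons.
- rewrite Rminus_diag Rabs_R0.
  have := IH0 0%nat; rewrite take0 big_nil Rminus_diag Rabs_R0 => h; lra.
- have h := IH0 b.
  set S := \big[Rplus/0]_(v <- take b c) f v in h |- *.
  rewrite Rabs_minus_sym Rminus_0_r in h.
  rewrite Rabs_minus_sym Rminus_0_r.
  apply: Rle_trans (Rabs_triang _ _) _; lra.
- have h := IH0 a.
  set S := \big[Rplus/0]_(v <- take a c) f v in h |- *.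
  rewrite Rabs_minus_sym Rminus_0_r in h.
  rewrite Rminus_0_r.
  apply: Rle_trans (Rabs_triang _ _) _; lra.
- have h := IH a b.
  have -> : f x + \big[Rplus/0]_(v <- take a c) f v - (f x + \big[Rplus/0]_(v <- take b c) f v)
    = \big[Rplus/0]_(v <- take a c) f v - \big[Rplus/0]_(v <- take b c) f v by ring.
  lra.
Qed.
Definition Phi (T : finType) (Z : {set T}) (nbrs : T -> seq T) (H : T -> R)
  (st : ((T -> nat) * (T -> T))%type) : R :=
  \big[Rplus/0]_(x : T) (INR (st.1 x) * H x)
  - \big[Rplus/0]_(u in ~: Z) psi H (nbrs u) u (st.2 u).
Arguments Phi {T}.

Lemma move_phi (T : finType) (e : rel T) (Z : {set T}) (nbrs : T -> seq T) (H : T -> R)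
  (e_irr : irreflexive e)
  (nbrs_spec : forall u v, (v \in nbrs u) = e u v)
  (nbrs_uniq : forall u, uniq (nbrs u))
  (harm : forall u, u \notin Z -> \big[Rplus/0]_(v <- nbrs u) (H v - H u) = 0)
  st st' u :
  (forall w, w \notin Z -> st.2 w \in nbrs w) -> rotor_move Z nbrs st u = Some st' ->
  (forall w, w \notin Z -> st'.2 w \in nbrs w) /\ Phi Z nbrs H st' = Phi Z nbrs H st.
Proof.
case: st => cnt rot /= Hinv.
rewrite /rotor_move; case: ifP => // /andP [uZ cu] [<-] {st'}.
set r := next (nbrs u) (rot u).
have rin : r \in nbrs u by rewrite mem_next Hinv.
have ru : (r == u) = false.
  apply/negbTE/eqP => hr; move: rin; rewrite nbrs_spec hr; by rewrite e_irr.
split.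
  move=> w wZ /=; case: eqP => [->|_] //; exact: Hinv.
rewrite /Phi /=.
have -> : \big[Rplus/0]_(x : T) (INR ((if x == r then (if x == u then cnt x else (cnt x).+1)
            else if x == u then (cnt x).-1 else cnt x)) * H x)
   = \big[Rplus/0]_(x : T) (INR (cnt x) * H x)
     + \big[Rplus/0]_(x : T) (if x == r then H r else 0)
     + \big[Rplus/0]_(x : T) (if x == u then - H u else 0).
  rewrite -!big_split /=; apply: eq_bigr => x _.
  case: (eqVneq x r) => [->|xr].
    rewrite ru S_INR; lra.
  case: (eqVneq x u) => [->|xu].
    have hc : cnt u = (cnt u).-1.+1 by rewrite prednK.
    rewrite [in INR (cnt u)]hc S_INR; lra.
  lra.
rewrite !sumR_pred1.
have uZ' : u \in ~: Z by rewrite in_setC.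
rewrite (bigD1 u uZ') (bigD1 u uZ') /= eqxx.
have -> : \big[Rplus/0]_(i | (i \in ~: Z) && (i != u))
     psi H (nbrs i) i (if i == u then r else rot i) =
    \big[Rplus/0]_(i | (i \in ~: Z) && (i != u)) psi H (nbrs i) i (rot i).
  by apply: eq_bigr => w /andP [_ /negbTE ->].
rewrite psi_next //; [|exact: Hinv|exact: harm].
rewrite -/r.
match goal with |- _ = _ - (_ + ?G) => set SG := G end.
match goal with |- _ - (_ + _ + ?F) = _ => set SF := F end.
have -> : SF = SG by [].
lra.
Qed.

Lemma run_phi (T : finType) (e : rel T) (Z : {set T}) (nbrs : T -> seq T) (H : T -> R)
  (e_irr : irreflexive e)
  (nbrs_spec : forall u v, (v \in nbrs u) = e u v)
  (nbrs_uniq : forall u, uniq (nbrs u))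
  (harm : forall u, u \notin Z -> \big[Rplus/0]_(v <- nbrs u) (H v - H u) = 0)
  ms st st' :
  (forall w, w \notin Z -> st.2 w \in nbrs w) -> rotor_run Z nbrs st ms = Some st' ->
  Phi Z nbrs H st' = Phi Z nbrs H st.
Proof.
elim: ms st => [|u ms IH] st Hinv /=; first by move=> [->].
case hm: (rotor_move Z nbrs st u) => [st1|] // hr.
have [Hinv1 Hp] := move_phi _ _ _ _ _ e_irr nbrs_spec nbrs_uniq harm _ _ _ Hinv hm.
by rewrite (IH st1 Hinv1 hr) Hp.
Qed.
Close Scope R_scope.

Theorem proposition5p7
  (T : finType) (e : rel T)
  (e_sym : symmetric e) (e_irr : irreflexive e)
  (e_conn : forall x y : T, connect e x y)
  (Y Z : {set T}) (YsubZ : Y \subset Z) (Z_nonempty : Z != set0)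
  (s : T -> nat)
  (nbrs : T -> seq T)
  (nbrs_uniq : forall u, uniq (nbrs u))
  (nbrs_spec : forall u v, (v \in nbrs u) = e u v)
  (rot0 : T -> T)
  (rot0_spec : forall u, u \notin Z -> rot0 u \in nbrs u)
  (ms : seq T) (cnt : T -> nat) (rot : T -> T)
  (run_ok : rotor_run Z nbrs (s, rot0) ms = Some (cnt, rot))
  (run_done : forall x, x \notin Z -> cnt x = 0%N)
  (H : T -> R) (H_def : is_hit_prob e Z Y H) :
  (Rabs (INR (\sum_(y in Y) cnt y) - Hw s H)
   <= \big[Rplus/0%R]_(u in ~: Z)
        \big[Rplus/0%R]_(v | e u v) Rabs (H u - H v))%R.
Proof.
have harmN : forall u, u \notin Z ->
    \big[Rplus/0%R]_(v <- nbrs u) (H v - H u)%R = 0%R.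
  move=> u uZ; rewrite (@nbrs_sum _ e (nbrs u) u _ (nbrs_uniq u) (nbrs_spec u)).
  exact: (harm_sum _ _ _ _ _ H_def u uZ).
have HP := run_phi _ _ _ _ H e_irr nbrs_spec nbrs_uniq harmN ms (s, rot0) (cnt, rot)
   rot0_spec run_ok.
rewrite /Phi /= in HP.
have E1 : \big[Rplus/0%R]_(x : T) (INR (cnt x) * H x)%R = INR (\sum_(y in Y) cnt y).
  rewrite INR_sum [X in _ = X]big_mkcond; apply: eq_bigr => x _.
  case: (boolP (x \in Z)) => xZ.
    rewrite (H_Z _ _ _ _ _ H_def x xZ); case: (x \in Y); lra.
  have xY : (x \in Y) = false.
    by apply/negbTE; apply: contra xZ; exact: (subsetP YsubZ).
  rewrite run_done // xY /=; lra.
rewrite /Hw -E1.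
set A := \big[Rplus/0%R]_(x : T) (INR (cnt x) * H x)%R in HP |- *.
set B := \big[Rplus/0%R]_(x : T) (INR (s x) * H x)%R in HP |- *.
set Pf := \big[Rplus/0%R]_(u in ~: Z) psi H (nbrs u) u (rot u) in HP.
set P0 := \big[Rplus/0%R]_(u in ~: Z) psi H (nbrs u) u (rot0 u) in HP.
have -> : (A - B = Pf + - P0)%R by lra.
rewrite /Pf /P0 -sumR_opp -big_split /=.
apply: Rle_trans (sumR_Rabs _ _ _ _) _.
apply: sumR_le => u _.
rewrite -(@nbrs_sum _ e (nbrs u) u _ (nbrs_uniq u) (nbrs_spec u)).
rewrite (eq_bigr (fun v => Rabs (H v - H u))); last by move=> v _; rewrite Rabs_minus_sym.
have := prefix_bound _ (nbrs u) (fun v => H v - H u)%R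
   (index (rot u) (nbrs u)).+1 (index (rot0 u) (nbrs u)).+1.
by rewrite /psi.
Qed.
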